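(* Let $M_{pq}=(W,V_{pq})$ be the inquisitive model with $W=\{w_1,w_2,w_3\}$, $V_{pq}(w_1)=\{p\}$, $V_{pq}(w_2)=\{q\}$, $V_{pq}(w_3)=\emptyset$, where $p,q$ are distinct propositional letters. Let $\varphi(a,b)$ be a formula of $\textsf{INQ}^-$ (with $a,b$ propositional letters) in which $p$ and $q$ do not occur, and let $\varphi(?p,?q)$ denote the result of replacing every occurrence of $a$ by $?p$ and every occurrence of $b$ by $?q$. If $\varphi(?p,?q)\not\equiv_{M_{pq}}\bot$, then $\{w_i\}\models\varphi(?p,?q)$ in $M_{pq}$ for each $i=1,2,3$.
   Context: $\textsf{INQ}^-$ is the propositional language built from countably many propositional letters using the 0-ary connectives $\bot,\top$, the unary connectives $\neg,?$ and the binary connectives $\land$, $\vee$ (inquisitive/global disjunction) and $\otimes$ (tensor). A model is a pair $M=(W,V)$ with $W$ a set of worlds and $V$ assigning to each world a set of propositional letters. Support at a state $s\subseteq W$ is defined by: $s\models p$ iff $p\in V(w)$ for all $w\in s$; $s\models\bot$ iff $s=\emptyset$; $s\models\top$ always; $s\models\psi\land\chi$ iff $s\models\psi$ and $s\models\chi$; $s\models\psi\vee\chi$ iff $s\models\psi$ or $s\models\chi$; $s\models\psi\otimes\chi$ iff there are $t_1,t_2$ with $t_1\models\psi$, $t_2\models\chi$ and $s=t_1\cup t_2$; $s\models\neg\psi$ iff $t\not\models\psi$ for all nonempty... precisely: iff for all $t\subseteq s$, $t\models\psi$ implies $t=\emptyset$; $s\models ?\psi$ iff $s\models\psi$ or $s\models\neg\psi$.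 Two formulas are equivalent in $M$ ($\psi\equiv_M\chi$) if they are supported by exactly the same states of $M$. *)

(* Defs.v *)
From mathcomp Require Import all_boot.
Set Implicit Arguments. Unset Strict Implicit. Unset Printing Implicit Defensive.

Inductive form : Type :=
  | Atom : nat -> form
  | FBot : form
  | FTop : form
  | FNeg : form -> form
  | FQ : form -> form
  | FAnd : form -> form -> form
  | FOr : form -> form -> form   (* inquisitive / global disjunction *)
  | FTensor : form -> form -> form.

Fixpoint occurs (x : nat) (f : form) : bool :=
  match f with
  | Atom y => y == x
  | FBot | FTop => false
  | FNeg g | FQ g => occurs x g
  | FAnd g h | FOr g h | FTensor g h => occurs x g || occurs x h
  end.

Fixpoint subst2 (a b p q : nat) (f : form) : form :=
  match f with
  | Atom y => if y == a then FQ (Atom p) else if y == b then FQ (Atom q) else Atom y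
  | FBot => FBot
  | FTop => FTop
  | FNeg g => FNeg (subst2 a b p q g)
  | FQ g => FQ (subst2 a b p q g)
  | FAnd g h => FAnd (subst2 a b p q g) (subst2 a b p q h)
  | FOr g h => FOr (subst2 a b p q g) (subst2 a b p q h)
  | FTensor g h => FTensor (subst2 a b p q g) (subst2 a b p q h)
  end.

(* Support semantics on a model with a finite set of worlds W and valuation
   V w x = true iff letter x is in V(w); states are subsets of W. *)
Fixpoint supp (W : finType) (V : W -> nat -> bool) (s : {set W}) (f : form) : Prop :=
  match f with
  | Atom x => forall w, w \in s -> V w x
  | FBot => s = set0
  | FTop => True
  | FAnd g h => supp V s g /\ supp V s h
  | FOr g h => supp V s g \/ supp V s h
  | FTensor g h => exists t1 t2 : {set W},
      supp V t1 g /\ supp V t2 h /\ s = t1 :|: t2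
  | FNeg g => forall t : {set W}, t \subset s -> supp V t g -> t = set0
  | FQ g => supp V s g \/
      (forall t : {set W}, t \subset s -> supp V t g -> t = set0)
  end.

Definition equiv_in (W : finType) (V : W -> nat -> bool) (f g : form) : Prop :=
  forall s : {set W}, supp V s f <-> supp V s g.

(* The model M_pq: W = {w1,w2,w3} encoded as 'I_3 = {0,1,2};
   V(w1) = {p}, V(w2) = {q}, V(w3) = {}. *)
Definition Vpq (p q : nat) (w : 'I_3) (x : nat) : bool :=
  ((val w == 0) && (x == p)) || ((val w == 1) && (x == q)).

(* Main.v *)
Require Import Defs.
From mathcomp Require Import all_boot.
From Stdlib Require Import Classical.

Section Gen.
Variable (W : finType) (V : W -> nat -> bool).

Lemma supp0 f : supp V set0 f.
Proof.
elim: f => /= [x|||g IH|g IH|g IHg h IHh|g IHg h IHh|g IHg h IHh] //.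
- by move=> w; rewrite in_set0.
- move=> t; rewrite subset0 => /eqP -> //.
- by left.
- by left.
- by exists set0, set0; rewrite setU0.
Qed.

Lemma persist f : forall s s' : {set W}, s \subset s' -> supp V s' f -> supp V s f.
Proof.
elim: f => /=.
- by move=> x s s' /subsetP H H' w /H /H'.
- by move=> s s' H E; subst s'; apply/eqP; rewrite -subset0.
- by [].
- move=> g _ s s' H H' t Ht; apply: H'; exact: subset_trans Ht H.
- move=> g IH s s' H [H'|H']; [left; exact: IH H H'|right].
  move=> t Ht; apply: H'; exact: subset_trans Ht H.
- by move=> g IHg h IHh s s' H [H1 H2]; split; [exact: IHg H H1|exact: IHh H H2].
- by move=> g IHg h IHh s s' H [H1|H1]; [left; exact: IHg H H1|right; exact: IHh H H1].
- move=> g IHg h IHh s s' H [t1 [t2 [H1 [H2 E]]]].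
  exists (t1 :&: s), (t2 :&: s); split; [|split].
  + exact: IHg (subsetIl _ _) H1.
  + exact: IHh (subsetIl _ _) H2.
  + rewrite -setIUl -E; apply/esym/setIidPr; exact: H.
Qed.

Lemma sub_single (t : {set W}) i : t \subset [set i] -> t = set0 \/ t = [set i].
Proof. by rewrite subset1 => /orP [/eqP ->|/eqP ->]; [right|left]. Qed.

Lemma supp_neg1 g i : supp V [set i] (FNeg g) <-> ~ supp V [set i] g.
Proof.
split => /=.
- move=> H Hg; have := H _ (subxx _) Hg => E.
  by have := set11 i; rewrite E in_set0.
- move=> H t /sub_single [->//|->] Hg; by case: (H Hg).
Qed.

Lemma supp_tensor1 g h i :
  supp V [set i] (FTensor g h) <-> supp V [set i] g \/ supp V [set i] h.
Proof.
split => /=.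
- move=> [t1 [t2 [H1 [H2 E]]]].
  have s1 : t1 \subset [set i] by rewrite E subsetUl.
  have s2 : t2 \subset [set i] by rewrite E subsetUr.
  case: (@sub_single _ _ s1) => e1; last by left; rewrite -e1.
  case: (@sub_single _ _ s2) => e2; last by right; rewrite -e2.
  by have := set11 i; rewrite E e1 e2 setU0 in_set0.
- move=> [H|H].
  + exists [set i], set0; rewrite setU0; split; first exact: H.
    split; [exact: supp0|reflexivity].
  + exists set0, [set i]; rewrite set0U; split; first exact: supp0.
    split; [exact: H|reflexivity].
Qed.

Lemma supp_atom1 x i : supp V [set i] (Atom x) <-> V i x.
Proof.
split => /=; first by apply; rewrite set11.
by move=> H w; rewrite in_set1 => /eqP ->.
Qed.

End Gen.

Definition AllOrNone (p q : nat) (f : form) :=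
  (forall i : 'I_3, supp (Vpq p q) [set i] f) \/
  (forall i : 'I_3, ~ supp (Vpq p q) [set i] f).

Lemma qatom_all p q x i : supp (Vpq p q) [set i] (FQ (Atom x)).
Proof.
case E: (Vpq p q i x).
- by left; apply/supp_atom1.
- right=> t /sub_single [->//|->] /supp_atom1; by rewrite E.
Qed.

Lemma inv (p q a b : nat) (phi : form) :
  ~~ occurs p phi -> ~~ occurs q phi -> AllOrNone p q (subst2 a b p q phi).
Proof.
elim: phi => [y|||g IH|g IH|g IHg h IHh|g IHg h IHh|g IHg h IHh] /=; rewrite /AllOrNone.
- move=> Hp Hq.
  case: (y == a); first by left=> i; exact: qatom_all.
  case: (y == b); first by left=> i; exact: qatom_all.
  right=> i /supp_atom1; rewrite /Vpq.
  by rewrite (negbTE Hp) (negbTE Hq) !andbF.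
- right=> i /= E; by have := set11 i; rewrite E in_set0.
- by left.
- move=> Hp Hq; case: (IH Hp Hq) => H.
  + by right=> i /supp_neg1 H'; apply: H'; exact: H.
  + by left=> i; apply/supp_neg1; exact: H.
- move=> Hp Hq; left=> i; case: (IH Hp Hq) => H.
  + by left; exact: H.
  + by right; exact: ((supp_neg1 _ (Vpq p q) (subst2 a b p q g) i).2 (H i)).
- rewrite !negb_or => /andP [Hp1 Hp2] /andP [Hq1 Hq2].
  case: (IHg Hp1 Hq1) => H1.
  + case: (IHh Hp2 Hq2) => H2.
    * by left=> i; split; [exact: H1|exact: H2].
    * by right=> i [_ /H2].
  + by right=> i [/H1].
- rewrite !negb_or => /andP [Hp1 Hp2] /andP [Hq1 Hq2].
  case: (IHg Hp1 Hq1) => H1; first by left=> i; left; exact: H1.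
  case: (IHh Hp2 Hq2) => H2; first by left=> i; right; exact: H2.
  by right=> i [/H1|/H2].
- rewrite !negb_or => /andP [Hp1 Hp2] /andP [Hq1 Hq2].
  case: (IHg Hp1 Hq1) => H1; first by left=> i; apply/supp_tensor1; left; exact: H1.
  case: (IHh Hp2 Hq2) => H2; first by left=> i; apply/supp_tensor1; right; exact: H2.
  by right=> i /supp_tensor1 [/H1|/H2].
Qed.

Theorem lemma1 (p q a b : nat) (phi : form) :
  p <> q -> a <> b ->
  ~~ occurs p phi -> ~~ occurs q phi ->
  ~ equiv_in (Vpq p q) (subst2 a b p q phi) FBot ->
  forall i : 'I_3, supp (Vpq p q) [set i] (subst2 a b p q phi).
Proof.
move=> _ _ Hp Hq Hne.
case: (@inv p q a b phi Hp Hq) => // H.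
exfalso; apply: Hne => s /=; split.
- move=> Hs; apply/eqP; apply/negPn/negP => /set0Pn [i Hi].
  apply: (H i); apply: (@persist _ (Vpq p q) _ [set i] s _ Hs); by rewrite sub1set.
- move=> ->; exact: supp0.
Qed.
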